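(* Let $\mathcal{P}$ be a set of mutually commuting Pauli operators on $n$ qubits, and let $r$ be the number of independent generators of $\mathcal{P}$. Run the qubitwise diagonalization algorithm described in the context on $\mathcal{P}$, choosing at every stage $\alpha$ a nonzero null vector of the stage tableau of symplectic weight at most $\lfloor r^{(\alpha)}/2\rfloor+1$ (such a vector always exists, e.g. one of minimum weight). Then the total number of CNOT gate conjugations in the resulting diagonalizing circuit is at most $n\lfloor r/2\rfloor-\lfloor r/2\rfloor^2$.
   Context: A Pauli operator on $m$ qubits is encoded, up to phase, by $u=(\boldsymbol{x},\boldsymbol{z})\in\mathbb{F}_2^{2m}$ via $P=\bigotimes_{j=1}^m X^{x_j}Z^{z_j}$. For a set of Pauli operators, the tableau $(\mathcal{X}\mid\mathcal{Z})$ is the binary matrix whose rows encode the operators; the number of independent generators is its $\mathbb{F}_2$-rank. An operator is diagonal on qubit $j$ if its $j$-th tensor factor is $I$ or $Z$. The symplectic weight of $(\boldsymbol{v},\boldsymbol{w})\in\mathbb{F}_2^{2m}$ is $\omega(\boldsymbol{v},\boldsymbol{w})=|\{j: (v_j,w_j)\neq(0,0)\}|$. Qubitwise diagonalization algorithm. Input: a set of mutually commuting Pauli operators on $n$ qubits. At stage $\alpha$: discard the qubits on which all operators are already diagonal; let $n^{(\alpha)}$ be the number of remaining qubits (stop if $n^{(\alpha)}=0$); let $T^{(\alpha)}$ be an independent generating set of the operators restricted to the remaining qubits, of size $r^{(\alpha)}$, and let $M^{(\alpha)}=(\mathcal{X}^{(\alpha)}\mid\mathcal{Z}^{(\alpha)})$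 be its $r^{(\alpha)}\times 2n^{(\alpha)}$ tableau. Choose a nonzero $(\boldsymbol{v},\boldsymbol{w})$ with $M^{(\alpha)}(\boldsymbol{v};\boldsymbol{w})=0$ over $\mathbb{F}_2$, and a qubit $i$ with $(v_i,w_i)\neq(0,0)$. Step 1: for each qubit $j$, if $v_j=0,w_j=1$ conjugate by $\mathrm{H}(j)$; if $v_j=w_j=1$ conjugate by $\mathrm{S}(j)$ then $\mathrm{H}(j)$. Step 2: for each $j\neq i$ with $(v_j,w_j)\neq(0,0)$, conjugate by $\mathrm{CNOT}(j,i)$. After this all operators are diagonal on qubit $i$; then proceed to stage $\alpha+1$. The output circuit is the composition of all gates used. *)

(* Defs.v *)
(* Pauli operators (up to phase) on n qubits are rows of a
   binary tableau (X | Z) over 'F_2; a finite set of k operators is a pair of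
   k x n matrices X, Z (row p = operator p). *)
From HB Require Import structures.
From mathcomp Require Import all_boot all_order all_algebra.
Set Implicit Arguments. Unset Strict Implicit. Unset Printing Implicit Defensive.
Import GRing.Theory.
Local Open Scope ring_scope.

Definition tab (k n : nat) := ('M['F_2]_(k, n) * 'M['F_2]_(k, n))%type.

Definition tableau k n (t : tab k n) : 'M['F_2]_(k, n + n) := row_mx t.1 t.2.

Definition commuting k n (t : tab k n) : Prop :=
  forall p q : 'I_k,
    \sum_(j < n) (t.1 p j * t.2 q j + t.2 p j * t.1 q j) = 0.

(* Qubits on which some operator is NOT diagonal (tensor factor X or Y). *)
Definition remaining k n (t : tab k n) : {set 'I_n} :=
  [set j | [exists p, t.1 p j != 0]].

(* The enumeration of the remaining qubits: stage qubit a |-> original qubit. *)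
Definition rem_idx k n (t : tab k n) : 'I_#|remaining t| -> 'I_n :=
  fun a => enum_val a.

Definition restricted k n (t : tab k n) : 'M['F_2]_(k, #|remaining t| + #|remaining t|) :=
  row_mx (colsub (@rem_idx k n t) t.1) (colsub (@rem_idx k n t) t.2).

(* Conjugation by single gates, acting on the binary tableau (phases dropped). *)
Definition gateH k n (j : 'I_n) (t : tab k n) : tab k n :=
  (\matrix_(p, q) (if q == j then t.2 p q else t.1 p q),
   \matrix_(p, q) (if q == j then t.1 p q else t.2 p q)).

Definition gateS k n (j : 'I_n) (t : tab k n) : tab k n :=
  (t.1, \matrix_(p, q) (if q == j then t.2 p q + t.1 p q else t.2 p q)).

(* CNOT(c, tg): X_c -> X_c X_tg, Z_tg -> Z_c Z_tg. *)
Definition gateCNOT k n (c tg : 'I_n) (t : tab k n) : tab k n :=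
  (\matrix_(p, q) (if q == tg then t.1 p tg + t.1 p c else t.1 p q),
   \matrix_(p, q) (if q == c then t.2 p c + t.2 p tg else t.2 p q)).

Definition sweight m (v w : 'rV['F_2]_m) : nat :=
  #|[set j : 'I_m | (v 0 j != 0) || (w 0 j != 0)]|.

(* Step 1 on one qubit j (original index), given (v_j, w_j). *)
Definition step1_qubit k n (a b : 'F_2) (j : 'I_n) (t : tab k n) : tab k n :=
  if (a == 0) && (b == 1) then gateH j t
  else if (a == 1) && (b == 1) then gateH j (gateS j t)
  else t.

(* One full stage (Step 1 then Step 2), for a null vector (v,w) on the
   remaining qubits and a chosen qubit i. *)
Definition apply_stage k n (t : tab k n)
    (v w : 'rV['F_2]_#|remaining t|) (i : 'I_#|remaining t|) : tab k n :=
  let f := @rem_idx k n t in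
  let t1 := foldr (fun a s => step1_qubit (v 0 a) (w 0 a) (f a) s) t
                  (enum 'I_#|remaining t|) in
  foldr (fun a s => gateCNOT (f a) (f i) s) t1
        [seq a <- enum 'I_#|remaining t| | (a != i) && ((v 0 a != 0) || (w 0 a != 0))].

Definition stage_cnots m (v w : 'rV['F_2]_m) (i : 'I_m) : nat :=
  #|[set a : 'I_m | (a != i) && ((v 0 a != 0) || (w 0 a != 0))]|.

(* A legal stage of the algorithm with the weight constraint of theorem 2:
   T is an independent generating set (row-free, same row space) of the
   restricted operators, of size s = r^(alpha); (v,w) is a nonzero null vector
   of T with weight <= floor(s/2)+1; i lies in its support. *)
Definition stage k n (t t' : tab k n) (c : nat) : Prop :=
  exists (s : nat) (T : 'M['F_2]_(s, #|remaining t| + #|remaining t|))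
         (v w : 'rV['F_2]_#|remaining t|) (i : 'I_#|remaining t|),
    [/\ row_free T, (T == restricted t)%MS,
        row_mx v w != 0, T *m (row_mx v w)^T = 0 &
    [/\ (sweight v w <= s./2 + 1)%N,
        (v 0 i != 0) || (w 0 i != 0),
        t' = apply_stage v w i &
        c = stage_cnots v w i]].

Inductive run k n : tab k n -> nat -> Prop :=
| run_stop (t : tab k n) : remaining t = set0 -> run t 0
| run_step (t t' : tab k n) (c c' : nat) :
    remaining t != set0 -> stage t t' c -> run t' c' -> run t (c + c')%N.

(* Main.v *)
Require Import Defs.
From mathcomp Require Import all_boot all_order all_algebra.
From mathcomp Require Import ring zify.
Set Implicit Arguments. Unset Strict Implicit. Unset Printing Implicit Defensive.
Import GRing.Theory.
Local Open Scope ring_scope.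

Lemma F2_cases (x : 'F_2) : x = 0 \/ x = 1.
Proof. by case: x => [[|[|//]] ?]; [left|right]; apply/val_inj. Qed.

Lemma F2_addxx (x : 'F_2) : x + x = 0.
Proof. by case: (F2_cases x) => ->; apply/val_inj. Qed.

Lemma ker_rank_le k m1 m2 (A : 'M['F_2]_(k, m1)) (B : 'M['F_2]_(k, m2)) :
  (forall u : 'rV_k, u *m A = 0 -> u *m B = 0) -> (\rank B <= \rank A)%N.
Proof.
move=> H.
have K : kermx A *m B = 0.
  apply/row_matrixP => i; rewrite row_mul row0; apply: H.
  by rewrite -row_mul mulmx_ker row0.
have := mulmx0_rank_max K; rewrite mxrank_ker.
have := rank_leq_row A. lia.
Qed.

Lemma mulmx_eq0P k m (u : 'rV['F_2]_k) (M : 'M['F_2]_(k, m)) :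
  u *m M = 0 <-> forall q, \sum_p u 0 p * M p q = 0.
Proof.
split=> [H q|H].
  by have := congr1 (fun N : 'M_(1, m) => N 0 q) H; rewrite !mxE.
by apply/rowP => q; rewrite !mxE H.
Qed.

Lemma iso_rank k m (X Z : 'M['F_2]_(k, m)) :
  (forall p q, \sum_(j < m) (X p j * Z q j + Z p j * X q j) = 0) ->
  (\rank (row_mx X Z) <= m)%N.
Proof.
move=> H.
have E : row_mx Z X *m (row_mx X Z)^T = 0.
  rewrite tr_row_mx mul_row_col; apply/matrixP => p q.
  rewrite !mxE -big_split /=.
  transitivity (\sum_(j < m) (X p j * Z q j + Z p j * X q j)); last exact: H p q.
  by apply: eq_bigr => j _; rewrite !mxE addrC.
have := mulmx0_rank_max E; rewrite mxrank_tr.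
have : (\rank (row_mx X Z) <= \rank (row_mx Z X))%N.
  apply: ker_rank_le => u; rewrite !mul_mx_row => /eqP.
  by rewrite row_mx_eq0 => /andP[/eqP -> /eqP ->]; rewrite row_mx0.
lia.
Qed.

Definition kp k n (t t' : tab k n) := forall u : 'rV['F_2]_k,
  u *m t.1 = 0 -> u *m t.2 = 0 -> u *m t'.1 = 0 /\ u *m t'.2 = 0.

Lemma kp_refl k n (t : tab k n) : kp t t.
Proof. by move=> u. Qed.

Lemma kp_trans k n (t1 t2 t3 : tab k n) : kp t1 t2 -> kp t2 t3 -> kp t1 t3.
Proof. by move=> H1 H2 u a b; case: (H1 u a b) => c d; apply: H2. Qed.

Lemma sum_if k (u : 'rV['F_2]_k) (b : bool) (A B : 'I_k -> 'F_2) :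
  \sum_p u 0 p * (if b then A p else B p) =
  if b then \sum_p u 0 p * A p else \sum_p u 0 p * B p.
Proof. by case: b. Qed.

Lemma kp_H k n j (t : tab k n) : kp t (gateH j t).
Proof.
move=> u /mulmx_eq0P h1 /mulmx_eq0P h2; split; apply/mulmx_eq0P => q /=;
under eq_bigr do rewrite mxE;
by rewrite sum_if h1 h2 if_same.
Qed.

Lemma kp_S k n j (t : tab k n) : kp t (gateS j t).
Proof.
move=> u h1 /mulmx_eq0P h2; split => //; move/mulmx_eq0P: h1 => h1.
apply/mulmx_eq0P => q /=; under eq_bigr do rewrite mxE.
rewrite sum_if; under eq_bigr do rewrite mulrDr. rewrite big_split /=. case: (q == j); last exact: h2.
by rewrite -[RHS](addr0 0); congr (_ + _); [exact: h2|exact: h1].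
Qed.

Lemma kp_CNOT k n c tg (t : tab k n) : kp t (gateCNOT c tg t).
Proof.
move=> u /mulmx_eq0P h1 /mulmx_eq0P h2; split; apply/mulmx_eq0P => q /=;
under eq_bigr do rewrite mxE; rewrite sum_if; under eq_bigr do rewrite mulrDr; rewrite big_split /=.
  by case: (q == tg); [rewrite -[RHS](addr0 0); congr (_ + _) | ]; solve [exact: h1].
by case: (q == c); [rewrite -[RHS](addr0 0); congr (_ + _) | ]; solve [exact: h2].
Qed.

Lemma kp_step1 k n a b j (t : tab k n) : kp t (step1_qubit a b j t).
Proof.
rewrite /step1_qubit; case: ifP => _; first exact: kp_H.
case: ifP => _; last exact: kp_refl.
eapply kp_trans; [exact: kp_S | exact: kp_H].
Qed.

Lemma comm_H k n j (t : tab k n) : commuting t -> commuting (gateH j t).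
Proof.
move=> H p q; rewrite -[RHS](H p q); apply: eq_bigr => i _ /=; rewrite !mxE.
by case: (i == j) => //; rewrite addrC.
Qed.

Lemma comm_S k n j (t : tab k n) : commuting t -> commuting (gateS j t).
Proof.
move=> H p q; rewrite -[RHS](H p q); apply: eq_bigr => i _ /=; rewrite !mxE.
case: (i == j) => //.
have -> : t.1 p i * (t.2 q i + t.1 q i) + (t.2 p i + t.1 p i) * t.1 q i
  = t.1 p i * t.2 q i + t.2 p i * t.1 q i + (t.1 p i * t.1 q i + t.1 p i * t.1 q i) by ring.
by rewrite F2_addxx addr0.
Qed.

Lemma comm_step1 k n a b j (t : tab k n) : commuting t -> commuting (step1_qubit a b j t).
Proof.
rewrite /step1_qubit => H; case: ifP => _; first exact: comm_H.
case: ifP => _ //; exact/comm_H/comm_S.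
Qed.

Lemma comm_CNOT k n (c tg : 'I_n) (t : tab k n) : c != tg ->
  commuting t -> commuting (gateCNOT c tg t).
Proof.
move=> ne H p q; set d := t.1 p c * t.2 q tg + t.2 p tg * t.1 q c.
rewrite -[RHS](H p q).
transitivity (\sum_(i < n) ((t.1 p i * t.2 q i + t.2 p i * t.1 q i)
   + ((if i == c then d else 0) + (if i == tg then d else 0)))).
  apply: eq_bigr => i _ /=; rewrite !mxE.
  case: (eqVneq i tg) => [->|ntg].
    by rewrite eq_sym (negbTE ne) add0r /d; ring.
  case: (eqVneq i c) => [->|nc]; first by rewrite addr0 /d; ring.
  by rewrite !addr0.
have E x : \sum_(i < n) (if i == x then d else 0) = d.
  by rewrite (bigD1 x) //= eqxx big1 ?addr0 // => i /negbTE ->.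
rewrite big_split /= [X in _ + X = _](_ : _ = 0) ?addr0 // big_split /=.
by transitivity (d + d); [congr (_ + _); apply: E | exact: F2_addxx].
Qed.

Lemma step1_other k n a b (j q : 'I_n) (t : tab k n) p : q != j ->
  (step1_qubit a b j t).1 p q = t.1 p q /\ (step1_qubit a b j t).2 p q = t.2 p q.
Proof.
move=> /negbTE nq; rewrite /step1_qubit.
by case: ifP => _; [|case: ifP => _]; rewrite //= !mxE nq // mxE nq.
Qed.

Lemma step1_j k n (a b : 'F_2) (j : 'I_n) (t : tab k n) p : (a != 0) || (b != 0) ->
  (step1_qubit a b j t).1 p j = a * t.1 p j + b * t.2 p j.
Proof.
rewrite /step1_qubit.
case: (F2_cases a) => ->; case: (F2_cases b) => -> //= _;
rewrite ?eqxx ?oner_eq0 /= ?mxE ?eqxx ?mxE ?eqxx ?mul0r ?mul1r ?add0r ?addr0 //.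
by rewrite addrC.
Qed.

Section Folds.
Variables (k n m : nat) (g : 'I_m -> 'I_n) (v w : 'rV['F_2]_m) (t : tab k n).
Hypothesis ginj : injective g.

Definition F1 (l : seq 'I_m) :=
  foldr (fun a s => step1_qubit (v 0 a) (w 0 a) (g a) s) t l.

Lemma F1_other l q p : q \notin map g l -> (F1 l).1 p q = t.1 p q /\ (F1 l).2 p q = t.2 p q.
Proof.
elim: l => [|a l IH] //=; rewrite in_cons negb_or => /andP[qa ql].
have [e1 e2] := IH ql.
have [f1 f2] := step1_other (v 0 a) (w 0 a) (F1 l) p qa.
by rewrite /F1 /= in f1 f2 *; rewrite f1 f2.
Qed.

Lemma F1_in l a0 p : uniq l -> a0 \in l -> (v 0 a0 != 0) || (w 0 a0 != 0) ->
  (F1 l).1 p (g a0) = v 0 a0 * t.1 p (g a0) + w 0 a0 * t.2 p (g a0).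
Proof.
elim: l => [|a l IH] //= /andP[al ul]; rewrite in_cons => /orP[/eqP ->|inl] supp.
  have [e1 e2] : (F1 l).1 p (g a) = t.1 p (g a) /\ (F1 l).2 p (g a) = t.2 p (g a).
    by apply: F1_other; rewrite mem_map.
  by rewrite /F1 /= step1_j // -/(F1 l) e1 e2.
have ne : g a0 != g a by apply/negP => /eqP /ginj E; move: al; rewrite -E inl.
have [f1 f2] := step1_other (v 0 a) (w 0 a) (F1 l) p ne.
by rewrite /F1 /= in f1 *; rewrite f1 -/(F1 l) IH.
Qed.

Lemma F1_kp l : kp t (F1 l).
Proof. elim: l => [|a l IH] /=; [exact: kp_refl | eapply kp_trans; [exact: IH | exact: kp_step1]]. Qed.

Lemma F1_comm l : commuting t -> commuting (F1 l).
Proof. move=> H; elim: l => [|a l IH] //=; exact: comm_step1. Qed.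

Variables (i : 'I_m).

Definition F2 (t1 : tab k n) (L : seq 'I_m) :=
  foldr (fun a s => gateCNOT (g a) (g i) s) t1 L.

Lemma F2_X t1 L p q : all (fun a => a != i) L ->
  (F2 t1 L).1 p q = if q == g i then t1.1 p (g i) + \sum_(a <- L) t1.1 p (g a) else t1.1 p q.
Proof.
elim: L q => [|a L IH] q /=.
  by rewrite big_nil addr0; case: eqP => [->|].
move=> /andP[ai aL]; rewrite /F2 /= mxE -/(F2 t1 L).
have ne : g a != g i by apply/negP => /eqP /ginj E; move: ai; rewrite E eqxx.
case: (eqVneq q (g i)) => [E|nq]; last by rewrite IH // (negbTE nq).
subst q.
by rewrite !IH // eqxx (negbTE ne) big_cons -addrA; congr (_ + _); rewrite addrC.
Qed.

Lemma F2_kp t1 L : kp t1 (F2 t1 L).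
Proof. elim: L => [|a L IH] /=; [exact: kp_refl | eapply kp_trans; [exact: IH | exact: kp_CNOT]]. Qed.

Lemma F2_comm t1 L : all (fun a => a != i) L -> commuting t1 -> commuting (F2 t1 L).
Proof.
move=> + H; elim: L => [|a L IH] //= /andP[ai aL].
apply: comm_CNOT; last exact: IH.
by apply/negP => /eqP /ginj E; move: ai; rewrite E eqxx.
Qed.

End Folds.

Lemma restricted_comm k n (t : tab k n) : commuting t ->
  forall p q, \sum_(a < #|remaining t|)
     (colsub (@rem_idx k n t) t.1 p a * colsub (@rem_idx k n t) t.2 q a
      + colsub (@rem_idx k n t) t.2 p a * colsub (@rem_idx k n t) t.1 q a) = 0.
Proof.
move=> H p q; rewrite -[RHS](H p q) [RHS](bigID (fun j => j \in remaining t)) /=.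
rewrite [X in _ = _ + X]big1 ?addr0; last first.
  move=> j; rewrite inE negb_exists => /forallP Hj.
  have h1 r : t.1 r j = 0 by apply/eqP; rewrite -[_ == _]negbK; exact: Hj.
  by rewrite !h1 mulr0 mul0r addr0.
rewrite [RHS]big_enum_val; apply: eq_bigr => a _; rewrite !mxE.
done.
Qed.

Lemma restricted_rank_rem k n (t : tab k n) : commuting t ->
  (\rank (restricted t) <= #|remaining t|)%N.
Proof. move=> H; apply: iso_rank; exact: restricted_comm. Qed.

Lemma restricted_rank_kp k n (X Z : 'M['F_2]_(k, n)) (t : tab k n) : kp (X, Z) t ->
  (\rank (restricted t) <= \rank (tableau (X, Z)))%N.
Proof.
move=> H; apply: ker_rank_le => u; rewrite /tableau mul_mx_row => /eqP.
rewrite row_mx_eq0 => /andP[/eqP h1 /eqP h2].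
have [/mulmx_eq0P e1 /mulmx_eq0P e2] := H u h1 h2.
rewrite /restricted mul_mx_row.
have -> : u *m colsub (@rem_idx k n t) t.1 = 0.
  by apply/mulmx_eq0P => a; rewrite -[RHS](e1 (rem_idx a)); apply: eq_bigr => p _; rewrite mxE.
have -> : u *m colsub (@rem_idx k n t) t.2 = 0.
  by apply/mulmx_eq0P => a; rewrite -[RHS](e2 (rem_idx a)); apply: eq_bigr => p _; rewrite mxE.
by rewrite row_mx0.
Qed.

Lemma stage_props k n (t t' : tab k n) c :
  commuting t -> stage t t' c ->
  [/\ commuting t', kp t t', (#|remaining t'| < #|remaining t|)%N &
      (c <= (\rank (restricted t))./2)%N].
Proof.
move=> H [s [T [v [w [i [rf eqm nz null [sw supi -> ->]]]]]]].
set m := #|remaining t|.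
set f := @rem_idx k n t.
have finj : injective f by apply: enum_val_inj.
set P := fun a : 'I_m => (a != i) && ((v 0 a != 0) || (w 0 a != 0)).
set L := [seq a <- enum 'I_m | P a].
set t1 := F1 f v w t (enum 'I_m).
have -> : apply_stage v w i = F2 f i t1 L by [].
have allL : all (fun a => a != i) L.
  by apply/allP => a; rewrite mem_filter /P => /andP[/andP[]].
have rkT : \rank T = s by apply/eqP.
have rkR : \rank (restricted t) = s by rewrite -rkT (eqmx_rank eqm).
split.
- by apply: F2_comm => //; apply: F1_comm.
- apply: (kp_trans (t2:=t1)); [exact: F1_kp | exact: F2_kp].
- have X0 p : (F2 f i t1 L).1 p (f i) = 0.
    rewrite F2_X // eqxx.
    set G := fun a => v 0 a * t.1 p (f a) + w 0 a * t.2 p (f a).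
    have E1 a : (v 0 a != 0) || (w 0 a != 0) -> t1.1 p (f a) = G a.
      by move=> sa; rewrite /t1 F1_in ?enum_uniq ?mem_enum.
    rewrite E1 // /L big_filter (eq_bigr G); last by move=> a /andP[_ sa]; exact: E1.
    rewrite big_enum_cond /=.
    have S1 : \sum_(a | (v 0 a != 0) || (w 0 a != 0)) G a = G i + \sum_(a | P a) G a.
      by rewrite (bigD1 i) //=; congr (_ + _); apply: eq_bigl => a; rewrite /P andbC.
    rewrite -S1 big_mkcond /=.
    transitivity (\sum_(a < m) G a).
      apply: eq_bigr => a _; case: ifP => // /negbT.
      by rewrite negb_or !negbK => /andP[/eqP v0 /eqP w0]; rewrite /G v0 w0 !mul0r addr0.
    have RT : (restricted t <= T)%MS by case/andP: eqm.
    case/submxP: RT => D RD.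
    have : (restricted t *m (row_mx v w)^T) p 0 = 0 by rewrite RD -mulmxA null mulmx0 mxE.
    rewrite /restricted tr_row_mx mul_row_col !mxE => E; rewrite -[RHS]E -big_split.
    by apply: eq_bigr => a _; rewrite !mxE /G mulrC [w 0 a * _]mulrC.
  have sub : remaining (F2 f i t1 L) \subset remaining t :\ f i.
    apply/subsetP => q; rewrite [q \in remaining _]inE => /existsP[p nzq].
    have nqi : q != f i by apply: contraNneq nzq => ->; rewrite X0.
    rewrite in_setD1 nqi /=; apply: contraT => qn.
    have qm : q \notin map f (enum 'I_m).
      by apply/mapP => -[a _ E]; move: qn; rewrite E /f /rem_idx enum_valP.
    have [e1 _] := F1_other v w t p qm.
    move: nzq; rewrite F2_X // (negbTE nqi) /t1 e1.
    by move: qn; rewrite inE negb_exists => /forallP /(_ p); rewrite negbK => /eqP ->; rewrite eqxx.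
  have lt : (#|remaining t :\ f i| < #|remaining t|)%N.
    by rewrite [X in (_ < X)%N](cardsD1 (f i)) enum_valP.
  exact: leq_ltn_trans (subset_leq_card sub) lt.
- rewrite rkR.
  have E : sweight v w = (stage_cnots v w i).+1.
    rewrite /sweight /stage_cnots (cardsD1 i) inE supi add1n; congr (_.+1).
    by apply: eq_card => a; rewrite !inE.
  by move: sw; rewrite E addn1 ltnS.
Qed.

Definition Bnd (h m : nat) : nat :=
  if (2 * h <= m)%N then (m * h - h * h)%N else (m %/ 2 * (m - m %/ 2))%N.

Lemma Bnd_step h m : (0 < m)%N -> (minn h (m %/ 2) + Bnd h m.-1 <= Bnd h m)%N.
Proof.
move=> m0; rewrite /Bnd.
have [q [b [E b2]]] : exists q b, m = (2 * q + b)%N /\ (b < 2)%N.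
  exists (m %/ 2)%N, (m %% 2)%N; split; last by rewrite ltn_mod. 
  lia.
have e1 : (m %/ 2 = q)%N by lia.
have e2 : (m.-1 %/ 2 = q - (1 - b))%N by lia.
rewrite e1 e2.
case: ifP => h1; case: ifP => h2; nia.
Qed.

Lemma run_bound k n (X Z : 'M['F_2]_(k, n)) (t : tab k n) c : run t c ->
  commuting t -> kp (X, Z) t -> forall m, (#|remaining t| <= m)%N ->
  (c <= Bnd (\rank (tableau (X, Z)))./2 m)%N.
Proof.
elim=> [t0 _ _ _ m _ | t0 t' c0 c' ne st _ IH] /=; first by rewrite leq0n.
move=> Hc Hk m Hm.
have [ct kt lt cb] := stage_props Hc st.
have r1 := restricted_rank_rem Hc.
have r2 := restricted_rank_kp Hk.
have m0 : (0 < m)%N := leq_trans (leq_ltn_trans (leq0n _) lt) Hm.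
have : (c' <= Bnd (\rank (tableau (X, Z)))./2 m.-1)%N.
  by apply: (IH ct (kp_trans Hk kt)); rewrite -ltnS prednK //; exact: leq_trans lt Hm.
have := Bnd_step (\rank (tableau (X, Z)))./2 m0.
have : (c0 <= minn (\rank (tableau (X, Z)))./2 (m %/ 2))%N.
  rewrite leq_min; apply/andP; split.
    exact: leq_trans cb (half_leq r2).
  rewrite divn2; apply: leq_trans cb (half_leq _); exact: leq_trans r1 Hm.
lia.
Qed.

Unset Implicit Arguments.
Local Close Scope ring_scope.

Theorem theorem2 (n k : nat) (X Z : 'M['F_2]_(k, n)) (c : nat) :
  commuting (X, Z) -> run (X, Z) c ->
  let r := \rank (tableau (X, Z)) in
  (c <= n * r./2 - r./2 ^ 2)%N.
Proof.
move=> Hc Hr /=; set r := \rank (tableau (X, Z)).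
have rn : (r <= n)%N by apply: iso_rank; exact: Hc.
have := run_bound Hr Hc (@kp_refl _ _ (X, Z)) (max_card _).
rewrite card_ord /Bnd -/r.
have -> : (2 * r./2 <= n)%N = true.
  apply: leq_trans rn; rewrite -divn2; lia.
by rewrite -mulnn.
Qed.
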